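(* In the standing setting of the context, for all $r,t>0$ and all $x\in M$, $$\mathbb{P}^x\big(d(X_t,x)\le r\big)\asymp1\wedge\frac{V(r)}{V(\phi^{-1}(t))},$$ with comparison constants independent of $x,r,t$.
   Context: Standing setting: $(M,d)$ is a locally compact separable metric space, $\mu$ a positive Radon measure on $M$ with full support, $(\mathcal{E},\mathcal{F})$ a regular Dirichlet form on $L^2(M;\mu)$ (no killing part), and $X=(\{X_t\},\{\mathbb P^x\})$ the associated $\mu$-symmetric Hunt process. $V,\phi$ are increasing functions on $(0,\infty)$, $\phi^{-1}$ the inverse of $\phi$, with constants $c_i,d_i>0$ ($i=1,\dots,4$) such that $c_1(R/r)^{d_1}\le V(R)/V(r)\le c_2(R/r)^{d_2}$ and $c_3(R/r)^{d_3}\le\phi(R)/\phi(r)\le c_4(R/r)^{d_4}$ for all $0<r<R<\infty$. $X$ has a symmetric heat kernel $p(t,x,y)$ defined for all $x,y\in M$, $t>0$, with $p(t,x,y)\asymp\frac{1}{V(\phi^{-1}(t))}\wedge\frac{t}{V(d(x,y))\phi(d(x,y))}$ for all $x,y,t$. $f\asymp g$ means $c^{-1}f\le g\le cf$ with $c\ge1$ independent of the variables. *)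

(* Defs.v *)
From HB Require Import structures.
From mathcomp Require Import all_boot all_order all_algebra.
From mathcomp Require Import all_classical all_reals all_analysis.
Set Implicit Arguments. Unset Strict Implicit. Unset Printing Implicit Defensive.
Import Order.TTheory GRing.Theory Num.Theory.
Import numFieldNormedType.Exports.
Local Open Scope classical_set_scope.
Local Open Scope ring_scope.

Section MetricDefs.
Variables (R : realType) (M : Type) (d : M -> M -> R).

Definition is_metric : Prop :=
  [/\ forall x y, 0 <= d x y,
      forall x y, d x y = 0 <-> x = y,
      forall x y, d x y = d y x &
      forall x y z, d x z <= d x y + d y z].

Definition oball (x : M) (e : R) : set M := [set y | d x y < e].
Definition cball (x : M) (e : R) : set M := [set y | d x y <= e].

(* the family of open balls (generating the Borel sets of a separable metric space) *)
Definition open_balls : set (set M) :=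
  [set B | exists x e, B = oball x e].

Definition seq_compact (K : set M) : Prop :=
  forall u : nat -> M, (forall n, K (u n)) ->
    exists (s : nat -> nat) (l : M),
      (forall n, (s n < s n.+1)%N) /\ K l /\
      ((fun n => d (u (s n)) l) @ \oo --> (0 : R)).

Definition locally_compact_metric : Prop :=
  forall x, exists2 e : R, 0 < e & seq_compact (cball x e).

Definition separable_metric : Prop :=
  exists2 S : set M, countable S &
    forall x (e : R), 0 < e -> exists2 y, S y & d x y < e.
End MetricDefs.

(* the heat kernel profile  1/V(phi^{-1}(t)) /\ t/(V(r) phi(r)),
   where for r = 0 (i.e. x = y) the second term is +infinity *)
Definition hk_profile (R : realType) (V phi phiinv : R -> R) (t r : R) : R :=
  if r == 0 then (V (phiinv t))^-1
  else Num.min (V (phiinv t))^-1 (t / (V r * phi r)).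

(* Main.v *)
Require Import Defs.
From HB Require Import structures.
From mathcomp Require Import all_boot all_order all_algebra.
From mathcomp Require Import all_classical all_reals all_analysis.
From mathcomp Require Import measurable_realfun.
From mathcomp.algebra_tactics Require Import ring lra.
Import Order.TTheory GRing.Theory Num.Theory.
Import numFieldNormedType.Exports.
Local Open Scope classical_set_scope.
Local Open Scope ring_scope.

Section H.
Context (d : measure_display) (T : measurableType d) (R : realType) (mu : measure T R).

Lemma int_le (A : set T) (f : T -> R) (c : R) : measurable A -> measurable_fun A f ->
  (forall y, A y -> 0 <= f y) -> (forall y, A y -> f y <= c) ->
  (\int[mu]_(y in A) (f y)%:E <= c%:E * mu A)%E.
Proof.
move=> mA mf f0 fc.
rewrite -integral_cst //.
apply: ge0_le_integral; first exact: mA.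
- by move=> y Ay; rewrite lee_fin f0.
- exact/measurable_EFinP.
- exact: measurable_cst.
- by move=> y Ay /=; rewrite lee_fin fc.
Qed.

Lemma int_ge (A : set T) (f : T -> R) (c : R) : measurable A -> measurable_fun A f ->
  0 <= c -> (forall y, A y -> c <= f y) ->
  (c%:E * mu A <= \int[mu]_(y in A) (f y)%:E)%E.
Proof.
move=> mA mf c0 fc.
rewrite -integral_cst //.
apply: ge0_le_integral; first exact: mA.
- by move=> y Ay; rewrite lee_fin.
- exact: measurable_cst.
- exact/measurable_EFinP.
- by move=> y Ay /=; rewrite lee_fin fc.
Qed.

Lemma int_le_scale (A : set T) (f g : T -> R) (k : R) : measurable A ->
  measurable_fun A f -> measurable_fun A g -> 0 <= k ->
  (forall y, A y -> 0 <= f y) -> (forall y, A y -> 0 <= g y) ->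
  (forall y, A y -> f y <= k * g y) ->
  (\int[mu]_(y in A) (f y)%:E <= k%:E * \int[mu]_(y in A) (g y)%:E)%E.
Proof.
move=> mA mf mg k0 f0 g0 fg.
rewrite -ge0_integralZl_EFin //; last exact/measurable_EFinP.
apply: ge0_le_integral; first exact: mA.
- by move=> y Ay; rewrite lee_fin f0.
- exact/measurable_EFinP.
- apply/measurable_EFinP; apply: measurable_funM => //; exact: measurable_cst.
- by move=> y Ay; rewrite -EFinM lee_fin fg.
Qed.
End H.

Lemma fin_between {R : realType} {e : \bar R} {b : R} : (0 <= e)%E -> (e <= b%:E)%E ->
  exists m, e = m%:E /\ 0 <= m <= b.
Proof.
case: e => [m | |] //=; rewrite ?lee_fin => h1 h2; first by exists m; rewrite h1 h2.
Qed.

Lemma cball_meas {R : realType} {dM : measure_display} {M : measurableType dM} {d : M -> M -> R}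
  (hborel : forall A : set M, measurable A <-> <<s open_balls d >> A) (x : M) (r : R) :
  measurable (cball d x r).
Proof.
have -> : cball d x r = \bigcap_n oball d x (r + n.+1%:R^-1).
  apply/seteqP; split => y /=.
    move=> hy n _; rewrite /oball /=.
    by apply: (le_lt_trans hy); rewrite ltrDl invr_gt0 ltr0n.
  move=> hy; rewrite /cball /= leNgt; apply/negP => h.
  have [k hk] := ltr_add_invr h.
  by have := hy k I; rewrite /oball /= => /(lt_trans hk); rewrite ltxx.
apply: bigcapT_measurable => n.
apply/hborel; apply: sub_gen_smallest.
by exists x, (r + n.+1%:R^-1).
Qed.
Theorem lemma4p20
  (R : realType)
  (* the state space: a locally compact separable metric space with its Borel sets *)
  (dM : measure_display) (M : measurableType dM) (d : M -> M -> R)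
  (hmetric : is_metric d)
  (hlc : locally_compact_metric d)
  (hsep : separable_metric d)
  (hborel : forall A : set M, measurable A <-> <<s open_balls d >> A)
  (* a positive Radon measure with full support *)
  (mu : {measure set M -> \bar R})
  (hradon : forall x : M, exists2 e : R, 0 < e & (mu (oball d x e) < +oo)%E)
  (hsupp : forall (x : M) (e : R), 0 < e -> (0 < mu (oball d x e))%E)
  (* scale functions V, phi and the inverse of phi *)
  (V phi phiinv : R -> R)
  (c1 c2 c3 c4 d1 d2 d3 d4 : R)
  (hc : [/\ 0 < c1, 0 < c2, 0 < c3 & 0 < c4])
  (hd : [/\ 0 < d1, 0 < d2, 0 < d3 & 0 < d4])
  (hVpos : forall r, 0 < r -> 0 < V r)
  (hphipos : forall r, 0 < r -> 0 < phi r)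
  (hVinc : forall r s, 0 < r -> r <= s -> V r <= V s)
  (hphiinc : forall r s, 0 < r -> r <= s -> phi r <= phi s)
  (hVscale : forall r s, 0 < r -> r < s ->
     c1 * (s / r) `^ d1 <= V s / V r /\ V s / V r <= c2 * (s / r) `^ d2)
  (hphiscale : forall r s, 0 < r -> r < s ->
     c3 * (s / r) `^ d3 <= phi s / phi r /\ phi s / phi r <= c4 * (s / r) `^ d4)
  (hphiinv1 : forall r, 0 < r -> phiinv (phi r) = r)
  (hphiinv2 : forall t, 0 < t -> 0 < phiinv t /\ phi (phiinv t) = t)
  (* the process X = (X_t, P^x): paths in M on a sample space Omega *)
  (dO : measure_display) (Omega : measurableType dO)
  (P : M -> probability Omega R)
  (X : R -> Omega -> M)
  (hXmeas : forall t, 0 <= t -> measurable_fun setT (X t))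
  (hX0 : forall x : M, P x [set w | X 0 w = x] = 1%E)
  (* its symmetric heat kernel p(t,x,y) (transition density w.r.t. mu) *)
  (p : R -> M -> M -> R)
  (hpnonneg : forall t x y, 0 < t -> 0 <= p t x y)
  (hpmeas : forall t x, 0 < t -> measurable_fun setT (p t x))
  (hpsym : forall t x y, 0 < t -> p t x y = p t y x)
  (hptrans : forall t (x : M) (A : set M), 0 < t -> measurable A ->
     P x (X t @^-1` A) = (\int[mu]_(y in A) (p t x y)%:E)%E)
  (* two-sided heat kernel estimate *)
  (hHK : exists2 C : R, 1 <= C & forall t x y, 0 < t ->
     C^-1 * hk_profile V phi phiinv t (d x y) <= p t x y /\
     p t x y <= C * hk_profile V phi phiinv t (d x y)) :
  exists2 C : R, 1 <= C & forall (r t : R) (x : M), 0 < r -> 0 < t ->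
     ((C^-1 * Num.min 1 (V r / V (phiinv t)))%:E
        <= P x [set w | (d (X t w) x <= r)%R])%E /\
     (P x [set w | (d (X t w) x <= r)%R]
        <= (C * Num.min 1 (V r / V (phiinv t)))%:E)%E.
Proof.
case: hmetric => dge0 deq dsym dtri.
case: hc => c1p c2p c3p c4p; case: hd => d1p d2p d3p d4p.
case: hHK => C C1 hk.
have C0 : 0 < C by apply: lt_le_trans C1.
have prof_le : forall t D, hk_profile V phi phiinv t D <= (V (phiinv t))^-1.
  by move=> t D; rewrite /hk_profile; case: ifP => _ //; rewrite ge_min lexx.
have prof_ge : forall t D, 0 < t -> 0 <= D -> D <= phiinv t ->
    (V (phiinv t))^-1 <= hk_profile V phi phiinv t D.
  move=> t D t0 D0 Dle; rewrite /hk_profile; case: ifP => // /negbT Dn0.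
  have Dp : 0 < D by rewrite lt_neqAle eq_sym Dn0 D0.
  have [rp tphi] := hphiinv2 t t0.
  rewrite le_min lexx /=.
  have h1 : V D <= V (phiinv t) := hVinc _ _ Dp Dle.
  have h2 : phi D <= t by rewrite -{1}tphi; exact: hphiinc.
  have VDp := hVpos _ Dp; have pDp := hphipos _ Dp; have Vrp := hVpos _ rp.
  have -> : t / (V D * phi D) = (V (phiinv t))^-1 * ((t * V (phiinv t)) / (V D * phi D)).
    by field; rewrite ?lt0r_neq0.
  rewrite ler_pMr ?invr_gt0 // ler_pdivlMr ?mulr_gt0 // mul1r mulrC.
  by apply: ler_pM => //; apply: ltW.
have prof_tail : forall t s D, 0 < t -> 0 < s -> phiinv s <= D ->
    hk_profile V phi phiinv t D <= (t / s) * hk_profile V phi phiinv s D.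
  move=> t s D t0 s0 Dle.
  have [rp sphi] := hphiinv2 s s0.
  have Dp : 0 < D := lt_le_trans rp Dle.
  have VDp := hVpos _ Dp; have pDp := hphipos _ Dp; have Vrp := hVpos _ rp.
  have h1 : V (phiinv s) <= V D := hVinc _ _ rp Dle.
  have h2 : s <= phi D by rewrite -{1}sphi; exact: hphiinc.
  rewrite /hk_profile (negbTE (lt0r_neq0 Dp)).
  have -> : Num.min (V (phiinv s))^-1 (s / (V D * phi D)) = s / (V D * phi D).
    apply/min_idPr.
    rewrite ler_pdivrMr ?mulr_gt0 // mulrC ler_pdivlMr // mulrC.
    by apply: ler_pM => //; apply: ltW.
  have -> : t / s * (s / (V D * phi D)) = t / (V D * phi D).
    by field; rewrite ?lt0r_neq0.
  by rewrite ge_min lexx orbT.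
have pup : forall t x y, 0 < t -> p t x y <= C * (V (phiinv t))^-1.
  move=> t x y t0; have [_ h] := hk t x y t0; apply: le_trans h _.
  by rewrite ler_pM2l.
have plow : forall t x y, 0 < t -> d x y <= phiinv t ->
    C^-1 * (V (phiinv t))^-1 <= p t x y.
  move=> t x y t0 hd; have [h _] := hk t x y t0; apply: le_trans _ h.
  by rewrite ler_pM2l ?invr_gt0 //; apply: prof_ge.
have ptail : forall t s x y, 0 < t -> 0 < s -> phiinv s <= d x y ->
    p t x y <= (C ^+ 2 * (t / s)) * p s x y.
  move=> t s x y t0 s0 hd.
  have [_ h2] := hk t x y t0; have [h3 _] := hk s x y s0.
  have ts0 : 0 <= t / s by rewrite divr_ge0 ?ltW.
  apply: (le_trans h2).
  have h5 : hk_profile V phi phiinv s (d x y) <= C * p s x y.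
    have -> : hk_profile V phi phiinv s (d x y) =
      C * (C^-1 * hk_profile V phi phiinv s (d x y)) by field; rewrite lt0r_neq0.
    by rewrite ler_pM2l.
  apply: le_trans (_ : C * (t / s * (C * p s x y)) <= _).
    rewrite ler_pM2l //; apply: le_trans (prof_tail _ _ _ t0 s0 hd) _.
    exact: ler_wpM2l.
  by rewrite le_eqVlt; apply/orP; left; apply/eqP; ring.
have pmeas : forall t x (A : set M), 0 < t -> measurable_fun A (p t x).
  move=> t x A t0; apply: (measurable_funS measurableT (@subsetT _ A)).
  exact: hpmeas.
have Xmeas : forall t (A : set M), 0 < t -> measurable A -> measurable (X t @^-1` A).
  move=> t A t0 mA; have := hXmeas t (ltW t0) measurableT A mA.
  by rewrite setTI.
have Pset : forall t x r, P x [set w | d (X t w) x <= r] = P x (X t @^-1` cball d x r).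
  move=> t x r; congr (P x _); apply/funext => w.
  by rewrite /preimage /cball /= dsym.
have muup : forall x r, 0 < r -> (mu (cball d x r) <= (C * V r)%:E)%E.
  move=> x r r0; set t := phi r.
  have t0 : 0 < t := hphipos _ r0.
  have ht : phiinv t = r := hphiinv1 _ r0.
  have mB := cball_meas hborel x r.
  have Vr0 := hVpos _ r0.
  have h2 : ((C^-1 * (V r)^-1)%:E * mu (cball d x r) <= 1)%E.
    apply: le_trans (probability_le1 (P x) (Xmeas _ _ t0 mB)).
    rewrite hptrans //; apply: int_ge => //.
    - exact: pmeas.
    - by rewrite mulr_ge0 ?invr_ge0 ?ltW.
    - by move=> y hy; rewrite -ht; apply: plow => //; rewrite ht.
  move: h2 (measure_ge0 mu (cball d x r)); case: (mu _) => [m | |] //=.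
    rewrite !lee_fin => h2 m0.
    have -> : m = (C * V r) * (C^-1 * (V r)^-1 * m) by field; rewrite ?lt0r_neq0.
    by rewrite -[X in _ <= X]mulr1 ler_pM2l // mulr_gt0.
  by rewrite mulry gtr0_sg ?mulr_gt0 ?invr_gt0 // mul1e.
  by move=> _ _; rewrite leNye.
set K := 2 * C ^+ 2 / c3.
have K0 : 0 < K by rewrite /K divr_gt0 // mulr_gt0 // exprn_gt0.
set A := (K + 1) `^ d3^-1.
have AK : A `^ d3 = K + 1.
  by rewrite /A -powRrM mulVf ?lt0r_neq0 // powRr1 // addr_ge0 ?ltW.
have A1 : 1 < A.
  have A1' : 1 <= A.
    have h : (K + 1) `^ 0 <= (K + 1) `^ d3^-1.
      by apply: ler_powR; [rewrite lerDr ltW | rewrite invr_ge0 ltW].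
    by rewrite powRr0 in h.
  rewrite lt_neqAle A1' andbT; apply/negP => /eqP hA.
  move: AK; rewrite -hA powR1 => /eqP; rewrite eq_sym -subr_eq0 addrK.
  by rewrite (negbTE (lt0r_neq0 K0)).
have A0 : 0 < A by apply: lt_trans A1.
set kappa := 2 * C * (c2 * A `^ d2).
have kappa0 : 0 < kappa by rewrite /kappa !mulr_gt0 // powR_gt0.
have mulow : forall x r, 0 < r -> ((V r / kappa)%:E <= mu (cball d x r))%E.
  move=> x r r0.
  set rho := r / A.
  have rho0 : 0 < rho by rewrite divr_gt0.
  have rhor : rho < r by rewrite /rho ltr_pdivrMr // ltr_pMr.
  have rA : r / rho = A by rewrite /rho; field; rewrite ?lt0r_neq0.
  set t := phi rho; set s := phi r.
  have t0 : 0 < t := hphipos _ rho0.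
  have s0 : 0 < s := hphipos _ r0.
  have ht : phiinv t = rho := hphiinv1 _ rho0.
  have hs : phiinv s = r := hphiinv1 _ r0.
  have Vrho0 := hVpos _ rho0.
  have Vr0 := hVpos _ r0.
  have ts : C ^+ 2 * (t / s) <= 2^-1.
    have [h1 _] := hphiscale _ _ rho0 rhor.
    rewrite rA AK -/s -/t in h1.
    have e : c3 * (K + 1) = 2 * C ^+ 2 + c3 by rewrite /K; field; rewrite lt0r_neq0.
    rewrite e in h1.
    have h2 : 2 * C ^+ 2 <= s / t by apply: le_trans h1; rewrite lerDl ltW.
    have -> : C ^+ 2 * (t / s) = 2^-1 * ((2 * C ^+ 2) / (s / t)).
      by field; rewrite ?lt0r_neq0.
    rewrite -[X in _ <= X]mulr1 ler_pM2l ?invr_gt0 ?ltr0n //.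
    by rewrite ler_pdivrMr ?divr_gt0 // mul1r.
  have mB := cball_meas hborel x r.
  have mBc : measurable (~` cball d x r) by apply: measurableC.
  have [m [hm /andP [m0 mle]]] := fin_between (measure_ge0 mu (cball d x r)) (muup x r r0).
  have [q1 [hq1 /andP [q10 q11]]] := fin_between (e := P x (X t @^-1` cball d x r))
     (measure_ge0 _ _) (probability_le1 _ (Xmeas _ _ t0 mB)).
  have [q2 [hq2 /andP [q20 q21]]] := fin_between (e := P x (X t @^-1` ~` cball d x r))
     (measure_ge0 _ _) (probability_le1 _ (Xmeas _ _ t0 mBc)).
  have [q3 [hq3 /andP [q30 q31]]] := fin_between (e := P x (X s @^-1` ~` cball d x r))
     (measure_ge0 _ _) (probability_le1 _ (Xmeas _ _ s0 mBc)).
  have sum1 : q1 + q2 = 1.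
    apply: EFin_inj; rewrite EFinD -hq1 -hq2 -measureU.
    - rewrite -preimage_setU setUCr preimage_setT; exact: probability_setT.
    - exact: Xmeas.
    - exact: Xmeas.
    - by rewrite -preimage_setI setICr preimage_set0.
  have hq1' : q1 <= C / V rho * m.
    rewrite -lee_fin -hq1 EFinM -hm hptrans // -ht.
    apply: int_le => //; first exact: pmeas.
    - by move=> y _; apply: hpnonneg.
    - by move=> y _; apply: pup.
  have hq2' : q2 <= C ^+ 2 * (t / s) * q3.
    rewrite -lee_fin -hq2 EFinM -hq3 !hptrans //.
    apply: int_le_scale => //; try exact: pmeas.
    - by apply: mulr_ge0; [exact: sqr_ge0 | exact: divr_ge0 (ltW t0) (ltW s0)].
    - by move=> y _; apply: hpnonneg.
    - by move=> y _; apply: hpnonneg.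
    - move=> y hy; apply: ptail => //; rewrite hs; apply: ltW.
      by rewrite ltNge; apply/negP.
  have hm1 : 2^-1 <= C / V rho * m.
    have : C ^+ 2 * (t / s) * q3 <= 2^-1.
      apply: le_trans ts; rewrite -[X in _ <= X]mulr1; apply: ler_wpM2l => //.
      by apply: mulr_ge0; [exact: sqr_ge0 | exact: divr_ge0 (ltW t0) (ltW s0)].
    lra.
  have hm2 : V rho / (2 * C) <= m.
    have -> : m = (V rho / C) * (C / V rho * m) by field; rewrite ?lt0r_neq0.
    have -> : V rho / (2 * C) = (V rho / C) * 2^-1 by field; rewrite ?lt0r_neq0.
    by apply: ler_wpM2l => //; rewrite divr_ge0 ?ltW.
  rewrite hm lee_fin; apply: le_trans hm2.
  have [_ h3] := hVscale _ _ rho0 rhor.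
  rewrite rA ler_pdivrMr ?mulr_gt0 // in h3.
  rewrite /kappa.
  have -> : V r / (2 * C * (c2 * A `^ d2)) = (V r / (c2 * A `^ d2)) / (2 * C).
    have hAd : 0 < A `^ d2 := powR_gt0 d2 A0.
    by field; rewrite !lt0r_neq0.
  rewrite ler_pM2r ?invr_gt0 ?mulr_gt0 // ler_pdivrMr ?mulr_gt0 ?powR_gt0 //.
  by rewrite mulrC.
  by rewrite addr_gt0.
have C2p : 0 < C ^+ 2 by rewrite exprn_gt0.
have Ck0 : 0 < C * kappa by rewrite mulr_gt0.
exists (Num.max (C ^+ 2) (C * kappa)).
  by rewrite le_max exprn_ege1.
move=> r t x r0 t0.
set C' := Num.max (C ^+ 2) (C * kappa).
have C'p : 0 < C' by rewrite lt_max C2p.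
have hinv : C'^-1 <= (C * kappa)^-1.
  by rewrite lef_pV2 ?posrE // le_max lexx orbT.
have hC2 : C ^+ 2 <= C' by rewrite le_max lexx.
have [rho0 tphi] := hphiinv2 t t0.
set rho := phiinv t.
have Vrho0 := hVpos _ rho0.
have Vr0 := hVpos _ r0.
set mn := Num.min 1 (V r / V rho).
have mn0 : 0 <= mn by rewrite le_min ler01 divr_ge0 ?ltW.
have mn1 : mn <= 1 by rewrite ge_min lexx.
have mn2 : mn <= V r / V rho by rewrite ge_min lexx orbT.
have mB := cball_meas hborel x r.
rewrite Pset.
have [q [hq /andP [q0 q1]]] := fin_between (e := P x (X t @^-1` cball d x r))
     (measure_ge0 _ _) (probability_le1 _ (Xmeas _ _ t0 mB)).
have [m [hm /andP [m0 mle]]] := fin_between (measure_ge0 mu (cball d x r)) (muup x r r0).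
have hint : P x (X t @^-1` cball d x r) = (\int[mu]_(y in cball d x r) (p t x y)%:E)%E.
  exact: hptrans.
have hqup : q <= C / V rho * m.
  rewrite -lee_fin -hq EFinM -hm hint.
  apply: int_le => //; first exact: pmeas.
  - by move=> y _; apply: hpnonneg.
  - by move=> y _; apply: pup.
have hlow : (C * kappa)^-1 * mn <= q.
  have [hr|hr] := lerP r rho.
    have hml := mulow x r r0; rewrite hm lee_fin in hml.
    have hql : C^-1 / V rho * m <= q.
      rewrite -lee_fin -hq EFinM -hm hint.
      apply: int_ge => //; first exact: pmeas.
      - by rewrite mulr_ge0 ?invr_ge0 ?ltW.
      - by move=> y hy; apply: plow => //; apply: le_trans hr.
    apply: le_trans hql.
    apply: le_trans (_ : C^-1 / V rho * (V r / kappa) <= _); last first.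
      by apply: ler_wpM2l => //; rewrite mulr_ge0 ?invr_ge0 ?ltW.
    have -> : C^-1 / V rho * (V r / kappa) = (C * kappa)^-1 * (V r / V rho).
      by field; rewrite !lt0r_neq0.
    by apply: ler_wpM2l => //; rewrite invr_ge0 ltW.
  have mBr := cball_meas hborel x rho.
  have [m' [hm' /andP [m'0 m'le]]] :=
    fin_between (measure_ge0 mu (cball d x rho)) (muup x rho rho0).
  have hml := mulow x rho rho0; rewrite hm' lee_fin in hml.
  have hql : C^-1 / V rho * m' <= q.
    rewrite -lee_fin -hq EFinM -hm' hint.
    apply: le_trans (_ : (\int[mu]_(y in cball d x rho) (p t x y)%:E <= _)%E).
      apply: int_ge => //; first exact: pmeas.
      - by rewrite mulr_ge0 ?invr_ge0 ?ltW.
      - by move=> y hy; apply: plow.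
    apply: ge0_subset_integral => //.
    - by apply/measurable_EFinP; apply: pmeas.
    - by move=> y _; rewrite lee_fin hpnonneg.
    - by move=> y; rewrite /cball /=; move=> hy; apply: le_trans hy (ltW hr).
  apply: le_trans hql.
  apply: le_trans (_ : C^-1 / V rho * (V rho / kappa) <= _); last first.
    by apply: ler_wpM2l => //; rewrite mulr_ge0 ?invr_ge0 ?ltW.
  have -> : C^-1 / V rho * (V rho / kappa) = (C * kappa)^-1.
    by field; rewrite !lt0r_neq0.
  by rewrite -[X in _ <= X]mulr1; apply: ler_wpM2l => //; rewrite invr_ge0 ltW.
split; rewrite hq lee_fin.
  apply: le_trans hlow; apply: ler_wpM2r => //.
have hq2 : q <= C ^+ 2 * mn.
  have [h|h] := lerP 1 (V r / V rho).
    rewrite /mn min_l // mulr1; apply: le_trans q1 _.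
    exact: exprn_ege1.
  rewrite /mn (min_r (ltW h)); apply: le_trans hqup _.
  have -> : C ^+ 2 * (V r / V rho) = C / V rho * (C * V r).
    by field; rewrite lt0r_neq0.
  by apply: ler_wpM2l => //; rewrite divr_ge0 ?ltW.
apply: le_trans hq2 _; exact: ler_wpM2r.
Qed.
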